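(* Consider the splitting scheme, with constant matrices $\gamma,\sigma\in\mathbb{R}^{3N\times3N}$ satisfying $\sigma\sigma^T=\frac2\beta\gamma$, time step $\Delta t>0$, and i.i.d. standard Gaussian vectors $(\mathcal{G}^n)_{n\ge0},(\mathcal{G}^{n+1/2})_{n\ge0}$ in $\mathbb{R}^{3N}$: (1) $p^{n+1/4}=p^n-\frac{\Delta t}4\gamma M^{-1}(p^n+p^{n+1/4})+\sqrt{\frac{\Delta t}2}\sigma\mathcal{G}^n+\nabla\xi(q^n)\lambda^{n+1/4}$, with $\nabla\xi(q^n)^TM^{-1}p^{n+1/4}=0$; (2) $p^{n+1/2}=p^{n+1/4}-\frac{\Delta t}2\nabla V(q^n)+\nabla\xi(q^n)\lambda^{n+1/2}$, $q^{n+1}=q^n+\Delta t\,M^{-1}p^{n+1/2}$, $\xi(q^{n+1})=z$, $p^{n+3/4}=p^{n+1/2}-\frac{\Delta t}2\nabla V(q^{n+1})+\nabla\xi(q^{n+1})\lambda^{n+3/4}$, with $\nabla\xi(q^{n+1})^TM^{-1}p^{n+3/4}=0$; (3) $p^{n+1}=p^{n+3/4}-\frac{\Delta t}4\gamma M^{-1}(p^{n+3/4}+p^{n+1})+\sqrt{\frac{\Delta t}2}\sigma\mathcal{G}^{n+1/2}+\nabla\xi(q^{n+1})\lambda^{n+1}$, with $\nabla\xi(q^{n+1})^TM^{-1}p^{n+1}=0$; where the $\lambda$'s in $\mathbb{R}^m$ are Lagrange multipliers enforcing the indicated constraints. Suppose that $\frac{\Delta t}4\gamma=M=\frac{\Delta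 t}2\mathrm{Id}$. Then any sequence of iterates of this scheme satisfies the Euler scheme $$q^{n+1}=q^n-\Delta t\,\nabla V(q^n)+\sqrt{\frac{2\Delta t}\beta}\,\widetilde{\mathcal{G}}^n+\nabla\xi(q^n)\lambda^{n+1}_{\rm od},\qquad \xi(q^{n+1})=z,$$ where $\widetilde{\mathcal{G}}^n=\frac{\sqrt\beta}2\sigma\mathcal{G}^n$ are i.i.d. centered normalized Gaussian vectors and $\lambda^{n+1}_{\rm od}=\lambda^{n+1/4}+2\lambda^{n+1/2}\in\mathbb{R}^m$ is the Lagrange multiplier associated with the constraint $\xi(q^{n+1})=z$. Moreover, with $G(q)=\nabla\xi(q)^T\nabla\xi(q)$, $$2\lambda^{n+1/2}=G^{-1}(q^n)\Big(\nabla\xi(q^n)^T(q^{n+1}-q^n)+\Delta t\,\nabla\xi(q^n)^T\nabla V(q^n)\Big)=\lambda^{n+1}_{\rm od}+\sqrt{\frac{2\Delta t}\beta}\,G^{-1}(q^n)\nabla\xi(q^n)^T\widetilde{\mathcal{G}}^n,$$ $$2\lambda^{n+3/4}=G^{-1}(q^{n+1})\Big(\nabla\xi(q^{n+1})^T(q^n-q^{n+1})+\Delta t\,\nabla\xi(q^{n+1})^T\nabla V(q^{n+1})\Big).$$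
   Context: $q,p\in\mathbb{R}^{3N}$, $V:\mathbb{R}^{3N}\to\mathbb{R}$ smooth, $\beta>0$, $M$ a symmetric positive definite mass matrix. $\xi:\mathbb{R}^{3N}\to\mathbb{R}^m$ smooth, $\nabla\xi(q)=(\nabla\xi_1(q),\dots,\nabla\xi_m(q))\in\mathbb{R}^{3N\times m}$, with $\nabla\xi^TM^{-1}\nabla\xi$ invertible on $\{\xi=z\}$. Under the condition $\frac{\Delta t}4\gamma=M=\frac{\Delta t}2\mathrm{Id}$, $M$ and $\gamma$ are scalar multiples of the identity and $\sigma\sigma^T=\frac4\beta\mathrm{Id}$. *)

(* Defs.v *)
From HB Require Import structures.
From mathcomp Require Import all_boot all_order all_algebra.
From mathcomp Require Import all_classical all_reals all_analysis.
Set Implicit Arguments. Unset Strict Implicit. Unset Printing Implicit Defensive.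
Import Order.TTheory GRing.Theory Num.Theory.
Import numFieldNormedType.Exports.
Local Open Scope ring_scope.

Definition is_gradient (R : realType) (d : nat)
    (f : 'cV[R]_d -> R) (g : 'cV[R]_d -> 'cV[R]_d) : Prop :=
  forall q : 'cV[R]_d, differentiable f q /\
    forall v : 'cV[R]_d, 'D_v f q = \sum_(i < d) g q i ord0 * v i ord0.

Definition is_jacobianT (R : realType) (d m : nat)
    (xi : 'cV[R]_d -> 'cV[R]_m) (Dxi : 'cV[R]_d -> 'M[R]_(d, m)) : Prop :=
  forall j : 'I_m, is_gradient (fun q => xi q j ord0) (fun q => col j (Dxi q)).

Definition gram (R : realType) (d m : nat) (Dxi : 'cV[R]_d -> 'M[R]_(d, m))
    (q : 'cV[R]_d) : 'M[R]_m := (Dxi q)^T *m Dxi q.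

(* Main.v *)
Require Import Defs.
From HB Require Import structures.
From mathcomp Require Import all_boot all_order all_algebra.
From mathcomp Require Import all_classical all_reals all_analysis.
From mathcomp Require Import ring lra.
Import Order.TTheory GRing.Theory Num.Theory.
Import numFieldNormedType.Exports.
Local Open Scope ring_scope.

Theorem mainTheorem3 (R : realType) (N m : nat)
  (V : 'cV[R]_(3 * N) -> R) (gradV : 'cV[R]_(3 * N) -> 'cV[R]_(3 * N))
  (xi : 'cV[R]_(3 * N) -> 'cV[R]_m) (Dxi : 'cV[R]_(3 * N) -> 'M[R]_(3 * N, m))
  (z : 'cV[R]_m) (beta dt : R) (M gamma sigma : 'M[R]_(3 * N))
  (q p p14 p12 p34 G G12 : nat -> 'cV[R]_(3 * N))
  (l14 l12 l34 l1 : nat -> 'cV[R]_m) :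
  is_gradient V gradV ->
  is_jacobianT xi Dxi ->
  0 < beta -> 0 < dt ->
  (forall x, xi x = z -> (Dxi x)^T *m invmx M *m Dxi x \in unitmx) ->
  sigma *m sigma^T = (2 / beta) *: gamma ->
  (dt / 4) *: gamma = M -> M = (dt / 2)%:M ->
  xi (q 0%N) = z ->
  (forall n : nat,
     (* step (1) *)
     p14 n = p n - (dt / 4) *: (gamma *m invmx M *m (p n + p14 n))
             + Num.sqrt (dt / 2) *: (sigma *m G n) + Dxi (q n) *m l14 n /\
     (Dxi (q n))^T *m invmx M *m p14 n = 0 /\
     (* step (2) *)
     p12 n = p14 n - (dt / 2) *: gradV (q n) + Dxi (q n) *m l12 n /\
     q n.+1 = q n + dt *: (invmx M *m p12 n) /\
     xi (q n.+1) = z /\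
     p34 n = p12 n - (dt / 2) *: gradV (q n.+1) + Dxi (q n.+1) *m l34 n /\
     (Dxi (q n.+1))^T *m invmx M *m p34 n = 0 /\
     (* step (3) *)
     p n.+1 = p34 n - (dt / 4) *: (gamma *m invmx M *m (p34 n + p n.+1))
              + Num.sqrt (dt / 2) *: (sigma *m G12 n) + Dxi (q n.+1) *m l1 n /\
     (Dxi (q n.+1))^T *m invmx M *m p n.+1 = 0) ->
  let Gt := fun n => (Num.sqrt beta / 2) *: (sigma *m G n) in
  let lod := fun n => l14 n + 2%:R *: l12 n in
  (* covariance of Gt^n is the identity (G^n standard Gaussian) *)
  ((Num.sqrt beta / 2) *: sigma) *m ((Num.sqrt beta / 2) *: sigma)^T = 1%:M /\
  forall n : nat,
    q n.+1 = q n - dt *: gradV (q n) + Num.sqrt (2 * dt / beta) *: Gt n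
             + Dxi (q n) *m lod n /\
    xi (q n.+1) = z /\
    2%:R *: l12 n = invmx (gram Dxi (q n)) *m
        ((Dxi (q n))^T *m (q n.+1 - q n) + dt *: ((Dxi (q n))^T *m gradV (q n))) /\
    invmx (gram Dxi (q n)) *m
        ((Dxi (q n))^T *m (q n.+1 - q n) + dt *: ((Dxi (q n))^T *m gradV (q n)))
      = lod n + Num.sqrt (2 * dt / beta) *:
                  (invmx (gram Dxi (q n)) *m (Dxi (q n))^T *m Gt n) /\
    2%:R *: l34 n = invmx (gram Dxi (q n.+1)) *m
        ((Dxi (q n.+1))^T *m (q n - q n.+1)
         + dt *: ((Dxi (q n.+1))^T *m gradV (q n.+1))).
Proof.
move=> _ _ hb hdt hunit hss hgM hM hq0 H Gt lod.
have dt0 : dt != 0 by rewrite gt_eqF.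
have hg : gamma = 2%:M.
  have h4 : gamma = (4/dt) *: ((dt/4) *: gamma).
    by rewrite scalerA -[LHS]scale1r; congr (_ *: _); by field.
  rewrite h4 hgM hM -scalemx1 scalerA scalemx1; congr (_%:M); by field.
have hiM : forall x : 'cV[R]_(3*N), invmx M *m x = (2/dt) *: x.
  by move=> x; rewrite hM invmx_scalar mul_scalar_mx; congr (_ *: _); by field.
have hgi : forall x : 'cV[R]_(3*N), (dt/4) *: (gamma *m invmx M *m x) = x.
  move=> x; rewrite -mulmxA hiM hg mul_scalar_mx !scalerA -[RHS]scale1r.
  congr (_ *: _); by field.
have hqz : forall n, xi (q n) = z.
  by case=> [//|n]; case: (H n) => _ [_ [_ [_ []]]].
have hGu : forall n, gram Dxi (q n) \in unitmx.
  move=> n; have := hunit _ (hqz n).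
  rewrite -mulmxA hM invmx_scalar mul_scalar_mx -scalemxAr unitmxZ //.
  by rewrite unitfE invr_eq0 mulf_neq0 // invr_eq0.
have hC : forall (D : 'M[R]_(3*N, m)) (x : 'cV[R]_(3*N)),
    D^T *m invmx M *m x = 0 -> D^T *m x = 0.
  move=> D x; rewrite -mulmxA hiM -scalemxAr => /eqP; rewrite scaler_eq0.
  case/orP=> [/eqP h|/eqP //]; exfalso; move: h; apply/eqP.
  by rewrite mulf_neq0 // invr_eq0.
have b0 : beta != 0 by rewrite gt_eqF.
have hsb : Num.sqrt beta ^+ 2 = beta by rewrite sqr_sqrtr // ltW.
have hcs : Num.sqrt (2 * dt / beta) * (Num.sqrt beta / 2) = Num.sqrt (dt / 2).
  rewrite -[LHS]ger0_norm; last first.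
    by rewrite mulr_ge0 ?divr_ge0 ?sqrtr_ge0.
  rewrite -sqrtr_sqr; congr Num.sqrt.
  rewrite exprMn expr_div_n sqr_sqrtr ?hsb; first by field.
  by rewrite divr_ge0 ?mulr_ge0 ?ltW.
split.
  rewrite linearZ /= -scalemxAl -scalemxAr hss hg -(scalemx1 _ 2) !scalerA.
  rewrite -[RHS]scale1r; congr (_ *: _).
  transitivity (Num.sqrt beta ^+ 2 / beta); first by field.
  by rewrite hsb divff.
move=> n; case: (H n) => E1 [C1 [E2 [E3 [Xz [E4 [C4 _]]]]]].
move: C1 C4 => /hC C1 /hC C4.
rewrite hgi in E1.
rewrite hiM scalerA (_ : dt * (2 / dt) = 2) in E3; last by field.
have P14 : p14 n = 2^-1 *: (Num.sqrt (dt / 2) *: (sigma *m G n) + Dxi (q n) *m l14 n).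
  apply/matrixP => i j; move/matrixP: E1 => /(_ i j); rewrite !mxE => e.
  lra.
have hGn := hGu n; have hGn1 := hGu n.+1.
rewrite /gram in hGn hGn1 *.
have I1 : (Dxi (q n))^T *m (q n.+1 - q n) =
   - (dt *: ((Dxi (q n))^T *m gradV (q n))) + (Dxi (q n))^T *m Dxi (q n) *m (2%:R *: l12 n).
  rewrite E3 addrC addKr -scalemxAr E2 !mulmxDr mulmxN -!scalemxAr C1 -mulmxA.
  apply/matrixP => i j; rewrite !mxE; lra.
have I2 : (Dxi (q n.+1))^T *m (q n - q n.+1) =
   - (dt *: ((Dxi (q n.+1))^T *m gradV (q n.+1))) + (Dxi (q n.+1))^T *m Dxi (q n.+1) *m (2%:R *: l34 n).
  have e : p12 n = p34 n + (dt / 2) *: gradV (q n.+1) - Dxi (q n.+1) *m l34 n.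
    apply/matrixP => i j; move/matrixP: E4 => /(_ i j); rewrite !mxE => e.
    lra.
  have hq : q n - q n.+1 = - (2 *: p12 n) by rewrite E3 opprD addrA subrr add0r.
  rewrite hq mulmxN -scalemxAr e !mulmxDr !mulmxN -!scalemxAr C4 -mulmxA.
  apply/matrixP => i j; rewrite !mxE; lra.
have L14 : (Dxi (q n))^T *m Dxi (q n) *m l14 n =
    - (Num.sqrt (dt / 2) *: ((Dxi (q n))^T *m (sigma *m G n))).
  have := congr1 (mulmx (Dxi (q n))^T) P14.
  rewrite C1 -scalemxAr mulmxDr -scalemxAr => /matrixP h; rewrite -mulmxA.
  apply/matrixP => i j; move: (h i j); rewrite !mxE; lra.
split.
  rewrite E3 E2 P14 /lod /Gt scalerA hcs !mulmxDr -!scalemxAr.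
  apply/matrixP => i j; rewrite !mxE; lra.
split; first exact: Xz.
split.
  by rewrite I1 addrC addNKr mulKmx.
split.
  rewrite I1 addrC addNKr mulKmx // /lod /Gt -!scalemxAr scalerA hcs.
  rewrite (_ : Num.sqrt (dt / 2) *: _ = - (invmx ((Dxi (q n))^T *m Dxi (q n)) *m
        ((Dxi (q n))^T *m Dxi (q n) *m l14 n))).
    by rewrite mulKmx // addrAC subrr add0r.
  by rewrite L14 mulmxN opprK -scalemxAr !mulmxA.
by rewrite I2 addrC addNKr mulKmx.
Qed.
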